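(* Let $n\ge1$, $P\ge0$, and $\mathbf{h}\in\mathbb{R}^n\setminus\{\mathbf{0}\}$. Let $\mathbf{G}=(1+P\|\mathbf{h}\|^2)\mathbf{I}-P\mathbf{h}\mathbf{h}^T$, $f(\mathbf{a})=\mathbf{a}^T\mathbf{G}\mathbf{a}$, and $\psi=\sqrt{1+P\|\mathbf{h}\|^2}$. Define $$\Phi=\bigcup_{j:\,h_j\ne0}\left\{\frac{c}{|h_j|}\;:\;c-\tfrac12\in\mathbb{Z},\ |c|\le\lceil\psi\rceil+\tfrac12\right\},$$ and list its elements in increasing order as $\xi_1<\xi_2<\dots<\xi_m$. For $x\in\mathbb{R}$ let $\mathbf{a}(x)=\lfloor\mathbf{h}x\rceil$ (componentwise nearest integer). Then $$\min_{\mathbf{a}\in\mathbb{Z}^n\setminus\{\mathbf{0}\}}f(\mathbf{a})=\min\Big(\min_{1\le i\le n}G_{ii},\ \min\big\{f(\mathbf{a}(\tfrac{\xi_i+\xi_{i+1}}{2}))\;:\;1\le i<m,\ \mathbf{a}(\tfrac{\xi_i+\xi_{i+1}}{2})\ne\mathbf{0}\big\}\Big).$$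
   Context: $\|\cdot\|$ is the Euclidean norm, $\lceil\cdot\rceil$ the ceiling function, $\mathbf{I}$ the $n\times n$ identity matrix. The values $G_{ii}=f(\mathbf{u}_i)$ correspond to the standard unit vectors $\mathbf{u}_i$. *)

(* Defs.v *)
From HB Require Import structures.
From mathcomp Require Import all_boot all_order all_algebra.
Set Implicit Arguments. Unset Strict Implicit. Unset Printing Implicit Defensive.
Import Order.TTheory GRing.Theory Num.Theory.
Local Open Scope ring_scope.

Section Defs.
Variable R : archiRcfType.
Variable n : nat.

Definition sqnorm (h : 'rV[R]_n) : R := \sum_(i < n) h 0 i ^+ 2.

(* G = (1 + P ||h||^2) I - P h h^T  (h as a row vector, so h h^T = h^T *m h here) *)
Definition Gmat (P : R) (h : 'rV[R]_n) : 'M[R]_n :=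
  (1 + P * sqnorm h)%:M - P *: (h^T *m h).

Definition intvec (a : 'rV[int]_n) : 'rV[R]_n := map_mx (fun z : int => z%:~R) a.

Definition fq (P : R) (h : 'rV[R]_n) (a : 'rV[int]_n) : R :=
  (intvec a *m Gmat P h *m (intvec a)^T) 0 0.

Definition psi (P : R) (h : 'rV[R]_n) : R := Num.sqrt (1 + P * sqnorm h).

Definition inPhi (P : R) (h : 'rV[R]_n) (x : R) : Prop :=
  exists j : 'I_n, h 0 j != 0 /\
    exists c : R, (c - 2^-1) \is a Num.int /\
      `|c| <= (Num.ceil (psi P h))%:~R + 2^-1 /\ x = c / `|h 0 j|.

(* nearest integer: round x = floor (x + 1/2) (halves rounded up) *)
Definition round (x : R) : int := Num.floor (x + 2^-1).

Definition avec (h : 'rV[R]_n) (x : R) : 'rV[int]_n := map_mx round (x *: h).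

Definition cands (P : R) (h : 'rV[R]_n) (xi : seq R) : seq R :=
  [seq Gmat P h i i | i <- enum 'I_n] ++
  [seq fq P h (avec h ((xi`_k + xi`_k.+1) / 2)) |
     k <- iota 0 (size xi).-1 & avec h ((xi`_k + xi`_k.+1) / 2) != 0].

Definition seqmin (s : seq R) : R := foldr Num.min (head 0 s) s.

End Defs.

(* Main.v *)
Require Import Defs.
From HB Require Import structures.
From mathcomp Require Import all_boot all_order all_algebra.
From mathcomp Require Import ring lra zify.
Import Order.TTheory GRing.Theory Num.Theory.
Set Implicit Arguments. Unset Strict Implicit.
Local Open Scope ring_scope.

Definition dotv (R : archiRcfType) (n : nat) (u v : 'rV[R]_n) : R :=
  \sum_i u 0 i * v 0 i.

Lemma quad_formula (R : archiRcfType) (n : nat) (P : R) (h u : 'rV[R]_n) :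
  (u *m Gmat P h *m u^T) 0 0 =
  (1 + P * sqnorm h) * sqnorm u - P * (dotv u h) ^+ 2.
Proof.
rewrite /Gmat mulmxBr mul_mx_scalar -scalemxAr mulmxBl -!scalemxAl !mxE.
have -> : \sum_j (u *m (h^T *m h)) 0 j * u^T j 0 = dotv u h ^+ 2.
  have -> : \sum_j (u *m (h^T *m h)) 0 j * u^T j 0 = (u *m (h^T *m h) *m u^T) 0 0.
    by rewrite mxE.
  rewrite mulmxA -mulmxA mxE big_ord1 !mxE expr2 /dotv; congr (_ * _).
  - by apply: eq_bigr => i _; rewrite !mxE.
  - by apply: eq_bigr => i _; rewrite !mxE mulrC.
congr (_ * _ - _); rewrite /sqnorm; apply: eq_bigr => i _; by rewrite !mxE expr2.
Qed.

Lemma sum_sq_expand (R : archiRcfType) (n : nat) (u h : 'rV[R]_n) (al be : R) :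
  \sum_i (al * u 0 i - be * h 0 i) ^+ 2 =
  al ^+ 2 * sqnorm u - 2 * al * be * dotv u h + be ^+ 2 * sqnorm h.
Proof.
rewrite /sqnorm /dotv.
transitivity (\sum_i (al ^+ 2 * u 0 i ^+ 2 - 2 * al * be * (u 0 i * h 0 i)
   + be ^+ 2 * h 0 i ^+ 2)).
  by apply: eq_bigr => i _; ring.
by rewrite big_split /= sumrB -!mulr_sumr.
Qed.

Lemma Gdiag (R : archiRcfType) (n : nat) (P : R) (h : 'rV[R]_n) i :
  Gmat P h i i = 1 + P * sqnorm h - P * h 0 i ^+ 2.
Proof.
rewrite /Gmat !mxE eqxx big_ord1 !mxE /=. ring.
Qed.

Lemma sqnorm_ge0 (R : archiRcfType) (n : nat) (u : 'rV[R]_n) : 0 <= sqnorm u.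
Proof. by apply: sumr_ge0 => i _; rewrite sqr_ge0. Qed.

Lemma sqnorm_ge_coord (R : archiRcfType) (n : nat) (u : 'rV[R]_n) j :
  u 0 j ^+ 2 <= sqnorm u.
Proof.
rewrite /sqnorm (bigD1 j) //= lerDl; by apply: sumr_ge0 => i _; rewrite sqr_ge0.
Qed.

Lemma sqnorm_gt0 (R : archiRcfType) (n : nat) (u : 'rV[R]_n) : u != 0 -> 0 < sqnorm u.
Proof.
move=> /eqP unz.
have [j hj] : exists j, u 0 j != 0.
  case: (pickP (fun j => u 0 j != 0)) => [j hj | H]; first by exists j.
  exfalso; apply: unz; apply/rowP => j; rewrite mxE.
  by move: (H j) => /negbFE/eqP.
apply: lt_le_trans (sqnorm_ge_coord u j). by rewrite lt_def sqr_ge0 sqrf_eq0 hj.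
Qed.

Lemma CS (R : archiRcfType) (n : nat) (u h : 'rV[R]_n) :
  0 < sqnorm h -> dotv u h ^+ 2 <= sqnorm u * sqnorm h.
Proof.
move=> sp.
have : 0 <= \sum_i (sqnorm h * u 0 i - dotv u h * h 0 i) ^+ 2.
  by apply: sumr_ge0 => i _; exact: sqr_ge0.
rewrite sum_sq_expand => H.
have : 0 <= sqnorm h * (sqnorm u * sqnorm h - dotv u h ^+ 2).
  by apply: le_trans H _; rewrite le_eqVlt; apply/orP; left; apply/eqP; ring.
by rewrite pmulr_rge0 // subr_ge0.
Qed.

Lemma nearest (R : archiRcfType) (r k : int) (y : R) :
  `|r%:~R - y| <= 2^-1 -> (r%:~R - y) ^+ 2 <= (k%:~R - y) ^+ 2.
Proof.
rewrite ler_norml => /andP [H1 H2].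
case: (ltgtP k r) => [kr|kr|->]; last by [].
- have : (k + 1 <= r)%R by rewrite lezD1.
  rewrite -(ler_int R) intrD => H. nra.
- have : (r + 1 <= k)%R by rewrite lezD1.
  rewrite -(ler_int R) intrD => H. nra.
Qed.

Lemma round_near (R : archiRcfType) (y : R) : `|(round y)%:~R - y| <= 2^-1.
Proof.
rewrite /round; have /andP [H1 H2] := floor_itv (y + 2^-1).
rewrite intrD in H2; rewrite ler_norml; apply/andP; split; lra.
Qed.

Lemma round_bound (R : archiRcfType) (y : R) (K : int) :
  `|round y| <= K -> `|y| <= K%:~R + 2^-1.
Proof.
rewrite /round ler_norml => /andP [H1 H2].
move: H1; rewrite floor_ge_int intrN => H1.
have : (Num.floor (y + 2^-1) < K + 1)%R by rewrite ltzD1.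
rewrite floor_lt_int intrD => H3.
rewrite ler_norml; apply/andP; split; lra.
Qed.

Definition Qf (R : archiRcfType) (n : nat) (P : R) (h u : 'rV[R]_n) : R :=
  (1 + P * sqnorm h) * sqnorm u - P * dotv u h ^+ 2.

Lemma fqE (R : archiRcfType) (n : nat) (P : R) (h : 'rV[R]_n) a :
  fq P h a = Qf P h (intvec R a).
Proof. by rewrite /fq quad_formula. Qed.

Lemma Dexp (R : archiRcfType) (n : nat) (h u : 'rV[R]_n) (x : R) :
  \sum_i (u 0 i - x * h 0 i) ^+ 2 = sqnorm u - 2 * x * dotv u h + x ^+ 2 * sqnorm h.
Proof.
have := sum_sq_expand u h 1 x; rewrite expr1n !mul1r mulr1 => <-.
by apply: eq_bigr => i _; rewrite mul1r.
Qed.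

Lemma Qf_upper (R : archiRcfType) (n : nat) (P : R) (h u : 'rV[R]_n) (x : R) :
  P * Qf P h u <= (1 + P * sqnorm h) *
     (P * \sum_i (u 0 i - x * h 0 i) ^+ 2 + x ^+ 2).
Proof.
rewrite Dexp /Qf -subr_ge0.
have -> : (1 + P * sqnorm h) *
     (P * (sqnorm u - 2 * x * dotv u h + x ^+ 2 * sqnorm h) + x ^+ 2) -
   P * ((1 + P * sqnorm h) * sqnorm u - P * dotv u h ^+ 2) =
   ((1 + P * sqnorm h) * x - P * dotv u h) ^+ 2 by ring.
exact: sqr_ge0.
Qed.

Lemma Qf_eq (R : archiRcfType) (n : nat) (P : R) (h u : 'rV[R]_n) :
  0 <= P ->
  let x := P * dotv u h / (1 + P * sqnorm h) in
  P * Qf P h u = (1 + P * sqnorm h) *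
     (P * \sum_i (u 0 i - x * h 0 i) ^+ 2 + x ^+ 2).
Proof.
move=> P0 x.
have qp : 0 < 1 + P * sqnorm h.
  by apply: lt_le_trans (ler_wpDr _ _) => //; rewrite mulr_ge0 // sqnorm_ge0.
apply/eqP; rewrite -subr_eq0 Dexp /Qf.
have -> : P * ((1 + P * sqnorm h) * sqnorm u - P * dotv u h ^+ 2) -
  (1 + P * sqnorm h) *
  (P * (sqnorm u - 2 * x * dotv u h + x ^+ 2 * sqnorm h) + x ^+ 2) =
   - ((1 + P * sqnorm h) * x - P * dotv u h) ^+ 2 by ring.
rewrite /x mulrCA divff ?mulr1 ?subrr ?expr0n ?oppr0 //.
by rewrite gt_eqF.
Qed.

Lemma int_cases (R : archiRcfType) (a : int) :
  a = 0 \/ (1 <= (a%:~R : R)) \/ ((a%:~R : R) <= -1).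
Proof.
case: (ltgtP a 0) => [H|H|->]; [right; right|right; left|by left].
- have : (a + 1 <= 0)%R by rewrite lezD1.
  rewrite -(ler_int R) intrD => H1; lra.
- have : (0 + 1 <= a)%R by rewrite lezD1.
  by rewrite add0r -(ler_int R).
Qed.

Lemma term_ge0 (R : archiRcfType) (a : int) (y : R) :
  `|y| <= 2^-1 -> 0 <= (a%:~R) ^+ 2 - 2 * a%:~R * y.
Proof.
rewrite ler_norml => /andP [H1 H2].
case: (int_cases R a) => [->|[H|H]]; first by have -> : (0%:~R : R) = 0 by []; lra.
- nra.
- nra.
Qed.

Lemma term_ge1 (R : archiRcfType) (a : int) (y : R) :
  `|y| <= 2^-1 -> a != 0 ->
  1 - 2 * (if 0 < a then 1 else -1) * y <= (a%:~R) ^+ 2 - 2 * a%:~R * y.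
Proof.
rewrite ler_norml => /andP [H1 H2] anz.
case: (int_cases R a) => [H|[H|H]]; first by rewrite H eqxx in anz.
- have -> : (0 < a)%R = true by rewrite -(ltr0z R); lra.
  nra.
- have -> : (0 < a)%R = false by apply/negbTE; rewrite -(ltr0z R); lra.
  nra.
Qed.

Lemma Qf_cmp (R : archiRcfType) (n : nat) (P : R) (h u v : 'rV[R]_n) :
  0 < P ->
  let x := P * dotv u h / (1 + P * sqnorm h) in
  \sum_i (v 0 i - x * h 0 i) ^+ 2 <= \sum_i (u 0 i - x * h 0 i) ^+ 2 ->
  Qf P h v <= Qf P h u.
Proof.
move=> P0 x H.
have qp : 0 < 1 + P * sqnorm h.
  by apply: lt_le_trans (ler_wpDr _ _) => //; rewrite mulr_ge0 ?sqnorm_ge0 ?ltW.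
rewrite -(ler_pM2l P0) (@Qf_eq _ _ P h u (ltW P0)) -/x.
apply: le_trans (Qf_upper P h v x) _.
by rewrite ler_pM2l // lerD2r ler_pM2l.
Qed.

Lemma unit_case (R : archiRcfType) (n : nat) (P : R) (h : 'rV[R]_n)
   (a : 'rV[int]_n) (j : 'I_n) :
  0 < P -> a 0 j != 0 ->
  let u := intvec R a in
  let x := P * dotv u h / (1 + P * sqnorm h) in
  (forall i, `|x * h 0 i| <= 2^-1) ->
  Gmat P h j j <= Qf P h u.
Proof.
move=> P0 aj u x Hy.
have qp : 0 < 1 + P * sqnorm h.
  by apply: lt_le_trans (ler_wpDr _ _) => //; rewrite mulr_ge0 ?sqnorm_ge0 ?ltW.
set sg : R := if (0 < a 0 j)%R then 1 else -1.
have sg2 : sg ^+ 2 = 1 by rewrite /sg; case: ifP => _; rewrite ?expr1n ?sqrrN ?expr1n.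
have uE : forall i, u 0 i = (a 0 i)%:~R by move=> i; rewrite /u /intvec mxE.
have Hsum : 1 - 2 * sg * (x * h 0 j) <= sqnorm u - 2 * x * dotv u h.
  have -> : sqnorm u - 2 * x * dotv u h =
      \sum_i ((a 0 i)%:~R ^+ 2 - 2 * (a 0 i)%:~R * (x * h 0 i)).
    rewrite /sqnorm /dotv mulr_sumr -sumrB; apply: eq_bigr => i _.
    rewrite uE; ring.
  rewrite (bigD1 j) //=; apply: le_trans (term_ge1 (Hy j) aj) _.
  rewrite lerDl; apply: sumr_ge0 => i _; exact: term_ge0.
rewrite -(ler_pM2l P0) (@Qf_eq _ _ P h u (ltW P0)) -/x Dexp Gdiag.
have -> : P * (1 + P * sqnorm h - P * h 0 j ^+ 2) =
   (1 + P * sqnorm h) * (P * (1 - 2 * x * (sg * h 0 j) + x ^+ 2 * sqnorm h) + x ^+ 2)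
   - ((1 + P * sqnorm h) * x - P * (sg * h 0 j)) ^+ 2.
  have -> : h 0 j ^+ 2 = (sg * h 0 j) ^+ 2 by rewrite exprMn sg2 mul1r.
  ring.
apply: le_trans (_ : _ <= (1 + P * sqnorm h) *
   (P * (1 - 2 * x * (sg * h 0 j) + x ^+ 2 * sqnorm h) + x ^+ 2)) _.
  by rewrite lerBlDr lerDl sqr_ge0.
rewrite ler_pM2l // lerD2r ler_pM2l // lerD2r.
have -> : 1 - 2 * x * (sg * h 0 j) = 1 - 2 * sg * (x * h 0 j) by ring.
exact: Hsum.
Qed.

Lemma minE (R : archiRcfType) (a b : R) : Num.min a b = a \/ Num.min a b = b.
Proof.
by case: (leP a b) => H; [left|right].
Qed.

Lemma seqmin_in (R : archiRcfType) (s : seq R) : s != [::] -> seqmin s \in s.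
Proof.
case: s => [//|y t] _; rewrite /seqmin /=.
have : foldr Num.min y t \in y :: t.
  elim: t => [|z t IH] /=; first by rewrite inE.
  have [->|->] := minE z (foldr Num.min y t).
  - by rewrite in_cons mem_head orbT.
  - by move: IH; rewrite !inE => /orP [->|->]; rewrite ?orbT.
have [->|->] := minE y (foldr Num.min y t).
- by rewrite mem_head.
- by [].
Qed.

Lemma seqmin_le (R : archiRcfType) (s : seq R) z : z \in s -> seqmin s <= z.
Proof.
rewrite /seqmin; move: (head 0 s) => x0.
elim: s => [//|y t IH]; rewrite inE /= => /orP [/eqP ->|zt].
- by rewrite ge_min lexx.
- by rewrite ge_min IH ?orbT.
Qed.

Lemma no_between (R : archiRcfType) (s : seq R) k z :
  sorted <%R s -> (k.+1 < size s)%N -> z \in s -> s`_k < z -> z < s`_k.+1 -> False.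
Proof.
move=> ss ks zs H1 H2.
have iz : (index z s < size s)%N by rewrite index_mem.
have zE : s`_(index z s) = z by rewrite nth_index.
have kl : (k < size s)%N by apply: ltn_trans ks.
case: (leqP (index z s) k) => ik.
- have : s`_(index z s) <= s`_k by rewrite (lt_sorted_leq_nth 0 ss).
  by rewrite zE leNgt H1.
- have : s`_k.+1 <= s`_(index z s) by rewrite (lt_sorted_leq_nth 0 ss).
  by rewrite zE leNgt H2.
Qed.

Lemma find_interval (R : archiRcfType) (s : seq R) (Lo Hi x : R) :
  sorted <%R s -> Lo \in s -> Hi \in s -> Lo < Hi -> Lo <= x -> x <= Hi ->
  exists k, [/\ (k.+1 < size s)%N, s`_k <= x, x <= s`_k.+1, Lo <= s`_k & s`_k.+1 <= Hi].
Proof.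
move=> ss Ls Hs LH Lx xH.
set iL := index Lo s; set iH := index Hi s.
have iLs : (iL < size s)%N by rewrite index_mem.
have iHs : (iH < size s)%N by rewrite index_mem.
have LE : s`_iL = Lo by rewrite nth_index.
have HE : s`_iH = Hi by rewrite nth_index.
have iLH : (iL < iH)%N by rewrite -(lt_sorted_ltn_nth 0 ss) ?inE // LE HE.
have key : forall m j, (iL <= j)%N -> (j + m.+1 = iH)%N -> s`_j <= x ->
    exists k, [/\ (iL <= k)%N, (k.+1 <= iH)%N, s`_k <= x & x <= s`_k.+1].
  elim=> [|m IH] j Lj jm sj.
  - exists j; split => //; first by rewrite -jm addn1.
    have -> : j.+1 = iH by rewrite -jm addn1.
    by rewrite HE.
  - case: (lerP x s`_j.+1) => xj.
    + by exists j; split => //; lia.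
    + apply: (IH j.+1) => //; [by apply: leqW | by rewrite -jm addSnnS | exact: ltW].
have [k [Lk kH sk xk]] : exists k, [/\ (iL <= k)%N, (k.+1 <= iH)%N, s`_k <= x & x <= s`_k.+1].
  apply: (key (iH - iL).-1 iL) => //; last by rewrite LE.
  rewrite prednK ?subn_gt0 // subnKC //; exact: ltnW.
have ks : (k.+1 < size s)%N by apply: leq_ltn_trans iHs.
have kl : (k < size s)%N by apply: ltn_trans ks.
exists k; split => //.
- by rewrite -LE (lt_sorted_leq_nth 0 ss).
- by rewrite -HE (lt_sorted_leq_nth 0 ss).
Qed.

Lemma intvecE (R : archiRcfType) (n : nat) (w : 'rV[int]_n) i :
  intvec R w 0 i = (w 0 i)%:~R.
Proof. by rewrite /intvec mxE. Qed.

Lemma avecE (R : archiRcfType) (n : nat) (h : 'rV[R]_n) x i :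
  avec h x 0 i = round (x * h 0 i).
Proof. by rewrite /avec !mxE. Qed.

Lemma near_cmp (R : archiRcfType) (n : nat) (P : R) (h : 'rV[R]_n) (a w : 'rV[int]_n) :
  0 < P ->
  let x := P * dotv (intvec R a) h / (1 + P * sqnorm h) in
  (forall i, `|(w 0 i)%:~R - x * h 0 i| <= 2^-1) -> fq P h w <= fq P h a.
Proof.
move=> P0 x H; rewrite !fqE; apply: Qf_cmp => //.
apply: ler_sum => i _; rewrite !intvecE; exact: nearest.
Qed.

Lemma fq_delta (R : archiRcfType) (n : nat) (P : R) (h : 'rV[R]_n) (i : 'I_n) :
  fq P h (delta_mx 0 i) = Gmat P h i i.
Proof.
rewrite fqE Gdiag /Qf.
have E : forall k, intvec R (delta_mx 0 i) 0 k = (k == i)%:R.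
  by move=> k; rewrite intvecE mxE eqxx /=; case: (k == i).
have -> : sqnorm (intvec R (delta_mx 0 i)) = 1.
  rewrite /sqnorm (bigD1 i) //= big1 ?addr0; first by rewrite E eqxx expr1n.
  by move=> k /negbTE ki; rewrite E ki expr0n.
have -> : dotv (intvec R (delta_mx 0 i)) h = h 0 i.
  rewrite /dotv (bigD1 i) //= big1 ?addr0; first by rewrite E eqxx mul1r.
  by move=> k /negbTE ki; rewrite E ki mul0r.
ring.
Qed.

Lemma mid_near (R : archiRcfType) (n : nat) (P : R) (h : 'rV[R]_n) (xi : seq R)
   (k : nat) (x hmax Hi : R) :
  sorted <%R xi -> (forall z, z \in xi <-> inPhi P h z) -> (k.+1 < size xi)%N ->
  xi`_k <= x -> x <= xi`_k.+1 ->
  - Hi <= xi`_k -> xi`_k.+1 <= Hi ->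
  0 < hmax -> (forall i, `|h 0 i| <= hmax) ->
  Hi * hmax = (Num.ceil (psi P h))%:~R + 2^-1 ->
  forall i, `|(round ((xi`_k + xi`_k.+1) / 2 * h 0 i))%:~R - x * h 0 i| <= 2^-1.
Proof.
move=> ss Hxi ks.
set a := xi`_k; set b := xi`_k.+1.
move=> ax xb Loa bHi hm0 hmax_ge HiE i.
have kl : (k < size xi)%N by apply: ltn_trans ks.
have ab : a < b by rewrite /a /b (lt_sorted_ltn_nth 0 ss) ?inE.
set m := (a + b) / 2.
have am : a < m by rewrite /m; lra.
have mb : m < b by rewrite /m; lra.
set r := round (m * h 0 i).
have /andP [R1 R2] := floor_itv (m * h 0 i + 2^-1).
rewrite intrD -/(round _) -/r in R2; rewrite -/(round _) -/r in R1.
case: (h 0 i =P 0) => [h0 | /eqP hnz].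
  by have := round_near (m * h 0 i); rewrite -/r h0 !mulr0.
have key : forall w, (w = r%:~R + 2^-1 \/ w = r%:~R - 2^-1) -> a < w / h 0 i < b -> False.
  move=> w wE /andP [az zb].
  set z := w / h 0 i.
  have habs : 0 < `|h 0 i| by rewrite normr_gt0.
  apply: (no_between ss ks _ az zb).
  apply/Hxi; exists i; split; first exact: hnz.
  exists (z * `|h 0 i|); split; last split.
  - case: (ltgtP (h 0 i) 0) => hs; last by rewrite hs eqxx in hnz.
    + rewrite ltr0_norm // mulrN /z mulfVK //.
      case: wE => ->.
      * have -> : - (r%:~R + 2^-1) - 2^-1 = ((- r - 1)%:~R : R) by rewrite intrB intrN; lra.
        exact: intr_int.
      * have -> : - (r%:~R - 2^-1) - 2^-1 = ((- r)%:~R : R) by rewrite intrN; lra.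
        exact: intr_int.
    + rewrite gtr0_norm // /z mulfVK //.
      case: wE => ->.
      * have -> : (r%:~R + 2^-1) - 2^-1 = (r%:~R : R) by lra.
        exact: intr_int.
      * have -> : (r%:~R - 2^-1) - 2^-1 = ((r - 1)%:~R : R) by rewrite intrB; lra.
        exact: intr_int.
  - have zH : `|z| <= Hi by rewrite ler_norml; apply/andP; split; rewrite /z; lra.
    have Hi0 : 0 <= Hi by apply: le_trans zH.
    rewrite normrM normr_id.
    by rewrite -HiE; apply: ler_pM => //; exact: normr_ge0.
  - by rewrite mulfK // gt_eqF.
rewrite ler_norml; apply/andP; split; rewrite leNgt; apply/negP => Hc.
- apply: (key (r%:~R + 2^-1)); first by left.
  case: (ltgtP (h 0 i) 0) => hs; last by rewrite hs eqxx in hnz.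
  + rewrite ltr_ndivlMr // ltr_ndivrMr //; apply/andP; split; nra.
  + rewrite ltr_pdivlMr // ltr_pdivrMr //; apply/andP; split; nra.
- apply: (key (r%:~R - 2^-1)); first by right.
  case: (ltgtP (h 0 i) 0) => hs; last by rewrite hs eqxx in hnz.
  + rewrite ltr_ndivlMr // ltr_ndivrMr //; apply/andP; split; nra.
  + rewrite ltr_pdivlMr // ltr_pdivrMr //; apply/andP; split; nra.
Qed.

Lemma exists_nz (R : archiRcfType) (n : nat) (a : 'rV[R]_n) :
  a != 0 -> exists j, a 0 j != 0.
Proof.
move=> /eqP unz.
case: (pickP (fun j => a 0 j != 0)) => [j hj | H]; first by exists j.
exfalso; apply: unz; apply/rowP => j; rewrite mxE.
by move: (H j) => /negbFE/eqP.
Qed.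

Lemma exists_nz_int (n : nat) (a : 'rV[int]_n) :
  a != 0 -> exists j, a 0 j != 0.
Proof.
move=> /eqP unz.
case: (pickP (fun j => a 0 j != 0)) => [j hj | H]; first by exists j.
exfalso; apply: unz; apply/rowP => j; rewrite mxE.
by move: (H j) => /negbFE/eqP.
Qed.

Theorem mainTheorem4 (R : archiRcfType) (n : nat) (P : R) (h : 'rV[R]_n)
    (xi : seq R) :
  (0 < n)%N -> 0 <= P -> h != 0 ->
  sorted <%R xi -> (forall x, x \in xi <-> inPhi P h x) ->
  (exists2 a : 'rV[int]_n, a != 0 & fq P h a = seqmin (cands P h xi)) /\
  (forall a : 'rV[int]_n, a != 0 -> seqmin (cands P h xi) <= fq P h a).
Proof.
move=> n0 P0 hnz ss Hxi.
have GinC : forall j, Gmat P h j j \in cands P h xi.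
  by move=> j; rewrite mem_cat; apply/orP; left; apply: map_f; rewrite mem_enum.
have candP : forall z, z \in cands P h xi -> exists2 a : 'rV[int]_n, a != 0 & fq P h a = z.
  move=> z; rewrite mem_cat => /orP [/mapP [i _ ->]| /mapP [k]].
  - exists (delta_mx 0 i); last exact: fq_delta.
    apply/eqP => /matrixP /(_ 0 i); rewrite !mxE !eqxx /=; done.
  - rewrite mem_filter => /andP [nz _] ->; by exists (avec h ((xi`_k + xi`_k.+1) / 2)).
have cne : cands P h xi != [::].
  have j : 'I_n by exists 0%N.
  by apply/eqP => E; have := GinC j; rewrite E.
have low : forall a : 'rV[int]_n, a != 0 ->
    exists2 z, z \in cands P h xi & z <= fq P h a.
  move=> a anz.
  have [j aj] := exists_nz_int anz.
  case: (leP (Gmat P h j j) (fq P h a)) => [Hle|Hlt]; first by exists (Gmat P h j j).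
  set u := intvec R a.
  have uj : 1 <= u 0 j ^+ 2.
    rewrite /u intvecE; case: (int_cases R (a 0 j)) => [H|[H|H]].
    - by rewrite H eqxx in aj.
    - nra.
    - nra.
  have sp : 0 < sqnorm h := sqnorm_gt0 hnz.
  have q0 : 0 < 1 + P * sqnorm h.
    by apply: lt_le_trans (ler_wpDr _ _) => //; rewrite mulr_ge0 // sqnorm_ge0.
  have uj2 := sqnorm_ge_coord u j.
  case: (P =P 0) => [Pz|/eqP Pnz].
    exfalso; move: Hlt; rewrite fqE Gdiag /Qf Pz -/u => H; lra.
  have Pp : 0 < P by rewrite lt_def Pnz P0.
  set x := P * dotv u h / (1 + P * sqnorm h).
  have unitc : (forall i, `|x * h 0 i| <= 2^-1) -> False.
    move=> H; have := @unit_case R n P h a j Pp aj H.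
    rewrite -fqE => H2; have := lt_le_trans Hlt H2; by rewrite ltxx.
  set b := avec h x.
  have bnear : forall i, `|(b 0 i)%:~R - x * h 0 i| <= 2^-1.
    by move=> i; rewrite avecE; exact: round_near.
  case: (b =P 0) => [b0 | /eqP bnz].
    exfalso; apply: unitc => i; have := bnear i.
    by rewrite b0 mxE mulr0z sub0r normrN.
  have fb : fq P h b <= fq P h a := near_cmp Pp bnear.
  set K := Num.ceil (psi P h).
  have psi2 : psi P h ^+ 2 = 1 + P * sqnorm h by rewrite /psi sqr_sqrtr // ltW.
  have psi0 : 0 <= psi P h := sqrtr_ge0 _.
  have Kpsi : psi P h <= K%:~R := ceil_ge _.
  have K0 : 0 <= (K%:~R : R) := le_trans psi0 Kpsi.
  have Gq : Gmat P h j j <= 1 + P * sqnorm h.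
    by rewrite Gdiag lerBlDr lerDl mulr_ge0 // sqr_ge0.
  have Nb : sqnorm (intvec R b) <= fq P h b.
    rewrite fqE /Qf; have := CS (intvec R b) sp => HC.
    have Nb0 := sqnorm_ge0 (intvec R b). nra.
  have bsm : forall i, `|b 0 i| <= K.
    move=> i.
    have Hb2 : ((b 0 i)%:~R : R) ^+ 2 < psi P h ^+ 2.
      rewrite psi2 -intvecE; have := sqnorm_ge_coord (intvec R b) i; lra.
    rewrite -(ler_int R) intr_norm.
    have := real_normK (num_real ((b 0 i)%:~R : R)).
    have := normr_ge0 ((b 0 i)%:~R : R). nra.
  have [jm hmax_ge] : exists jm, forall i, `|h 0 i| <= `|h 0 jm|.
    case: (@arg_maxP _ _ _ j xpredT (fun i => `|h 0 i|)) => // jm _ H.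
    by exists jm => i; apply: H.
  have hm0 : 0 < `|h 0 jm|.
    have [i hi] := exists_nz hnz.
    by apply: lt_le_trans (hmax_ge i); rewrite normr_gt0.
  set hmax := `|h 0 jm|.
  set Hi := (K%:~R + 2^-1) / hmax.
  have HiE : Hi * hmax = K%:~R + 2^-1 by rewrite /Hi mulfVK // gt_eqF.
  have Hi0 : 0 < Hi by rewrite /Hi divr_gt0 //; lra.
  have xHi : `|x| <= Hi.
    have := bsm jm; rewrite /b avecE => /round_bound; rewrite normrM -/hmax => H.
    by rewrite /Hi ler_pdivlMr.
  have Hin : Hi \in xi.
    apply/Hxi; exists jm; split; first by rewrite -normr_gt0.
    exists (K%:~R + 2^-1); split; first by rewrite addrK; exact: intr_int.
    by split => //; rewrite ger0_norm //; lra.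
  have Loin : - Hi \in xi.
    apply/Hxi; exists jm; split; first by rewrite -normr_gt0.
    exists (- (K%:~R + 2^-1)); split.
      have -> : - (K%:~R + 2^-1) - 2^-1 = ((- K - 1)%:~R : R) by rewrite intrB intrN; lra.
      exact: intr_int.
    by split; [rewrite normrN ger0_norm //; lra | rewrite mulNr].
  move: xHi; rewrite ler_norml => /andP [xL xH].
  have LH : - Hi < Hi by rewrite (lt_trans _ Hi0) // oppr_lt0.
  have [k [ks xk kx Lok kHi]] := find_interval ss Loin Hin LH xL xH.
  have b'near := mid_near ss Hxi ks xk kx Lok kHi hm0 hmax_ge HiE.
  set b' := avec h ((xi`_k + xi`_k.+1) / 2).
  have b'n : forall i, `|(b' 0 i)%:~R - x * h 0 i| <= 2^-1.
    by move=> i; rewrite avecE; exact: b'near.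
  case: (b' =P 0) => [b'0 | /eqP b'nz].
    exfalso; apply: unitc => i; have := b'n i.
    by rewrite b'0 mxE mulr0z sub0r normrN.
  exists (fq P h b'); last exact: near_cmp Pp b'n.
  rewrite mem_cat; apply/orP; right; apply: map_f.
  rewrite mem_filter b'nz mem_iota /= add0n.
  by rewrite -ltnS prednK // (leq_ltn_trans _ ks).
split; first by have /candP [a anz E] := seqmin_in cne; exists a.
move=> a /low [z zc za]; exact: le_trans (seqmin_le zc) za.
Qed.
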